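(* $$\sum_{k=1}^\infty\frac{(35k^2-316k+43)8^k}{k\binom{4k}k}=108+\frac{15}2\pi.$$ *)

(* Defs.v *)
From Stdlib Require Import Reals.
From Coquelicot Require Import Coquelicot.
Open Scope R_scope.

Definition lemma2p4_term (k : nat) : R :=
  (35 * INR k ^ 2 - 316 * INR k + 43) * 8 ^ k / (INR k * Binomial.C (4 * k) k).

(* Main.v *)
Require Import Defs.
From Stdlib Require Import Reals Lra Lia Arith Factorial.
From Coquelicot Require Import Coquelicot.
Open Scope R_scope.

Definition pp (m:R) := 35*m^2 - 316*m + 43.
Definition HH (m T : R) := pp (m+1)*(1-T)^2 + (70*(m+1)-281)*T*(1-T) + 70*T^2.
Definition GG T := (43*T^2+265*T-238)/(1-T)^3.

Lemma closed_form T N : T <> 1 ->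
  sum_n (fun n => pp (INR (S n)) * T^n) N = GG T - T^(S N) * HH (INR (S N)) T / (1-T)^3.
Proof.
  intros HT. assert (H1 : 1 - T <> 0) by lra.
  induction N.
  - rewrite sum_O. unfold GG, HH, pp. simpl. field. auto.
  - rewrite sum_Sn, IHN. change plus with Rplus.
    rewrite (S_INR (S N)). set (m := INR (S N)).
    unfold GG, HH, pp. simpl. field. auto.
Qed.

Ltac fold_SINR := repeat match goal with |- context [match ?b with 0%nat => 1 | S _ => INR ?b + 1 end] =>
   change (match b with 0%nat => 1 | S _ => INR b + 1 end) with (INR (S b)) end; rewrite ?S_INR.

Ltac normR := repeat (change (scal ?a ?b) with (a*b)); repeat (change (minus ?a ?b) with (a-b)); repeat (change (plus ?a ?b) with (a+b)); cbv beta.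
Ltac toR0 := match goal with |- ?a = ?b => change (@eq R a b) end; unfold Rminus.

Lemma RInt_val (f : R -> R) a b l l' : l = l' -> is_RInt f a b l -> is_RInt f a b l'.
Proof. intros ->; auto. Qed.

Lemma beta a : forall b, is_RInt (fun x => x^a * (1-x)^b) 0 1
   (INR (fact a) * INR (fact b) / INR (fact (a+b+1))).
Proof.
  induction a; intros b.
  - assert (HF : is_RInt (fun x => (1-x)^b) 0 1
        (minus ((fun x => - (1-x)^(S b) / (INR b + 1)) 1) ((fun x => - (1-x)^(S b) / (INR b + 1)) 0))).
    { apply (is_RInt_derive (fun x => - (1-x)^(S b) / (INR b + 1)) (fun x => (1-x)^b)).
      + intros x _. auto_derive. auto. fold_SINR. toR0. field.
        pose proof (pos_INR b). lra.
      + intros x _. apply (@ex_derive_continuous R_AbsRing R_CompleteNormedModule). auto_derive. auto. }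
    eapply RInt_val; [|eapply is_RInt_ext; [|exact HF]].
    + change (minus ?a ?b) with (a - b). replace (0 + b + 1)%nat with (S b) by lia.
      rewrite fact_simpl, mult_INR, S_INR. simpl fact. simpl pow. rewrite Rminus_0_r, pow1.
      pose proof (pos_INR b). pose proof (INR_fact_neq_0 b). simpl INR. match goal with |- ?a = ?b => change (@eq R a b) end. field; repeat split; try lra; auto.
    + intros x _. simpl. ring.
  - pose proof (IHa (S b)) as IH.
    assert (Hd : is_RInt (fun x => (INR a + 1) * (x^a * (1-x)^(S b)) - (INR b + 1) * (x^(S a) * (1-x)^b)) 0 1 0).
    { eapply RInt_val; [|apply (is_RInt_derive (fun x => x^(S a) * (1-x)^(S b)))].
      + change (minus ?a ?b) with (a - b). simpl. ring.
      + intros x _. auto_derive. auto. fold_SINR. simpl. toR0. ring.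
      + intros x _. apply (@ex_derive_continuous R_AbsRing R_CompleteNormedModule). auto_derive. auto. }
    pose proof (is_RInt_minus _ _ _ _ _ _ (is_RInt_scal _ _ _ (INR (S a)) _ IH) Hd) as H2.
    pose proof (is_RInt_scal _ _ _ (/ (INR b + 1)) _ H2) as H3.
    eapply RInt_val; [|eapply is_RInt_ext; [|exact H3]].
    + normR.
      replace (S a + b + 1)%nat with (a + S b + 1)%nat by lia.
      rewrite (fact_simpl a), (fact_simpl b), !mult_INR.
      pose proof (pos_INR b). pose proof (INR_fact_neq_0 b).
      pose proof (INR_fact_neq_0 (a + S b + 1)). rewrite !S_INR. toR0. field; repeat split; try lra; auto.
    + intros x _. normR.
      pose proof (pos_INR b). rewrite !S_INR. simpl. toR0. field; repeat split; try lra; auto.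
Qed.

Definition tt x := 8*x*(1-x)^3.
Definition SS x := 8*(1-x)^3 * GG (tt x).
Definition NN x := -160 + 555*x + 2517*x^2 -14436*x^3 + 26160*x^4 -23016*x^5 +10152*x^6 -1824*x^7.
Definition DD x := 1 - 8*x*(1-x)^3.
Definition F1 x := NN x / (DD x)^2 - 43/4 * ln (DD x) + 15/2 * atan ((4*x^2-6*x+1)/(2*x-1)).

Lemma DD_pos x : 0 < DD x.
Proof. unfold DD. assert (0 < (4*x^2-6*x+1)^2 + (2*x-1)^2).
  { destruct (Req_dec (2*x-1) 0). assert (x = 1/2) by lra. subst. lra.
    pose proof (Rsqr_pos_lt _ H). unfold Rsqr in *. pose proof (pow2_ge_0 (4*x^2-6*x+1)). lra. }
  replace (1 - 8*x*(1-x)^3) with (((4*x^2-6*x+1)^2 + (2*x-1)^2)/2) by field. lra. Qed.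

Lemma F1_der x : 2*x-1 <> 0 -> is_derive F1 x (SS x).
Proof. intros Hq. pose proof (DD_pos x) as Hd. unfold F1, SS, GG, tt, NN, DD in *.
  auto_derive.
  { replace (1 + - (8 * x * ((1 + - x) * ((1 + - x) * ((1 + - x) * 1))))) with (1 - 8*x*(1-x)^3) by ring.
    repeat split; try lra; repeat apply Rmult_integral_contrapositive_currified; lra. }
  toR0. field.
  assert (E1 : 1 + - (8 * x * (1 + - x) ^ 3) = 1 - 8 * x * (1 - x) ^ 3) by ring.
  assert (E2 : (2 * x + -1) * (2 * x + -1) + (4 * (x * x) + - (6 * x) + 1) * (4 * (x * x) + - (6 * x) + 1)
     = 2 * (1 - 8 * x * (1 - x) ^ 3)) by ring.
  rewrite E1, E2. repeat split; lra.
Qed.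

Definition F2 x := NN x / (DD x)^2 - 43/4 * ln (DD x) - 15/2 * atan ((2*x-1)/(4*x^2-6*x+1)).

Lemma F2_der x : 4*x^2-6*x+1 <> 0 -> is_derive F2 x (SS x).
Proof. intros Hq. pose proof (DD_pos x) as Hd. unfold F2, SS, GG, tt, NN, DD in *.
  auto_derive.
  { replace (1 + - (8 * x * ((1 + - x) * ((1 + - x) * ((1 + - x) * 1))))) with (1 - 8*x*(1-x)^3) by ring.
    replace (4 * (x * (x * 1)) + - (6 * x) + 1) with (4*x^2-6*x+1) by ring.
    repeat split; try lra; repeat apply Rmult_integral_contrapositive_currified; lra. }
  toR0. field.
  assert (E1 : 1 + - (8 * x * (1 + - x) ^ 3) = 1 - 8 * x * (1 - x) ^ 3) by ring.
  assert (E2 : (2 * x + -1) * (2 * x + -1) + (4 * (x * x) + - (6 * x) + 1) * (4 * (x * x) + - (6 * x) + 1)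
     = 2 * (1 - 8 * x * (1 - x) ^ 3)) by ring.
  assert (E3 : 4 * (x * x) + - (6 * x) + 1 = 4*x^2-6*x+1) by ring.
  rewrite ?E1, ?E2, ?E3. repeat split; try lra.
Qed.

Lemma SS_cont x : continuous SS x.
Proof. pose proof (DD_pos x) as Hd. unfold DD in Hd.
  apply (@ex_derive_continuous R_AbsRing R_CompleteNormedModule). unfold SS, GG, tt. auto_derive.
  replace (1 + - (8 * x * ((1 + - x) * ((1 + - x) * ((1 + - x) * 1))))) with (1 - 8*x*(1-x)^3) by ring.
  repeat split; try lra; repeat apply Rmult_integral_contrapositive_currified; lra.
Qed.

Lemma SS_int : is_RInt SS 0 1 (108 + 15/2*PI).
Proof.
  assert (H1 : is_RInt SS 0 (1/3) (F1 (1/3) - F1 0)).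
  { eapply RInt_val; [| apply (is_RInt_derive F1 SS)]; [reflexivity| |].
    - intros x Hx. rewrite Rmin_left, Rmax_right in Hx by lra. apply F1_der. lra.
    - intros x _. apply SS_cont. }
  assert (H2 : is_RInt SS (1/3) 1 (F2 1 - F2 (1/3))).
  { eapply RInt_val; [| apply (is_RInt_derive F2 SS)]; [reflexivity| |].
    - intros x Hx. rewrite Rmin_left, Rmax_right in Hx by lra. apply F2_der.
      assert ((x - 1/3) * (x - 1) <= 0) by nra. nra.
    - intros x _. apply SS_cont. }
  eapply RInt_val; [| exact (is_RInt_Chasles _ _ _ _ _ _ H1 H2)].
  normR. unfold F1, F2, NN, DD.
  replace (1 - 8*0*(1-0)^3) with 1 by ring.
  replace (1 - 8*1*(1-1)^3) with 1 by ring. rewrite ln_1.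
  replace ((4*(1/3)^2-6*(1/3)+1)/(2*(1/3)-1)) with (5/3) by field.
  replace ((2*(1/3)-1)/(4*(1/3)^2-6*(1/3)+1)) with (/(5/3)) by field.
  replace ((4*0^2-6*0+1)/(2*0-1)) with (-1) by field.
  replace ((2*1-1)/(4*1^2-6*1+1)) with (-1) by field.
  rewrite atan_inv by lra. assert (Ha : atan (-1) = - (PI/4)) by (rewrite <- atan_1, <- atan_opp; f_equal; ring). rewrite Ha. toR0. field.
Qed.

Definition fk n x := pp (INR (S n)) * 8 * (1-x)^3 * tt x ^ n.

Lemma term_int n : is_RInt (fk n) 0 1 (lemma2p4_term (S n)).
Proof.
  pose proof (is_RInt_scal _ _ _ (pp (INR (S n)) * 8^(S n)) _ (beta n (3 * S n))) as H.
  eapply RInt_val; [| eapply is_RInt_ext; [| exact H]].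
  - normR. unfold lemma2p4_term, Binomial.C, pp.
    replace (4 * S n - S n)%nat with (3 * S n)%nat by lia.
    replace (n + 3 * S n + 1)%nat with (4 * S n)%nat by lia.
    rewrite (fact_simpl n), mult_INR.
    pose proof (INR_fact_neq_0 n). pose proof (INR_fact_neq_0 (3 * S n)).
    pose proof (INR_fact_neq_0 (4 * S n)). pose proof (pos_INR n). rewrite S_INR in *.
    toR0. field. repeat split; try lra; auto.
  - intros x _. normR. unfold fk, tt. rewrite pow_mult, !Rpow_mult_distr. rewrite <- !tech_pow_Rmult. toR0. ring.
Qed.

Lemma psum_int N : is_RInt (fun x => sum_n (fun n => fk n x) N) 0 1 (sum_n (fun n => lemma2p4_term (S n)) N).
Proof.
  induction N.
  - rewrite sum_O. eapply is_RInt_ext; [| apply term_int]. intros x _. rewrite sum_O. reflexivity.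
  - rewrite sum_Sn. eapply is_RInt_ext; [| apply (is_RInt_plus _ _ _ _ _ _ IHN (term_int (S N)))].
    intros x _. rewrite sum_Sn. reflexivity.
Qed.

Definition EE N x := 8*(1-x)^3 * (tt x ^ (S N) * HH (INR (S N)) (tt x) / (1 - tt x)^3).

Lemma tt_bound x : 0 <= x <= 1 -> 0 <= tt x <= 27/32.
Proof. intros Hx. unfold tt. split.
  - assert (0 <= (1-x)^3) by (apply pow_le; lra). nra.
  - assert (E : 27/32 - 8*x*(1-x)^3 = (4*x-1)^2 * (16*x^2-40*x+27) / 32) by field.
    assert (0 <= (4*x-1)^2) by apply pow2_ge_0.
    assert (0 <= 16*x^2-40*x+27) by nra. nra.
Qed.

Lemma psum_closed N x : 0 <= x <= 1 -> sum_n (fun n => fk n x) N = SS x - EE N x.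
Proof.
  intros Hx. pose proof (tt_bound x Hx).
  replace (SS x - EE N x) with (8*(1-x)^3 * sum_n (fun n => pp (INR (S n)) * tt x ^ n) N).
  2: { rewrite closed_form by lra. unfold SS, EE. ring. }
  unfold fk. clear. induction N.
  - rewrite !sum_O. toR0. ring.
  - rewrite !sum_Sn, IHN. change plus with Rplus. toR0. ring.
Qed.

Lemma HH_bound (N : nat) T : 0 <= T <= 1 -> Rabs (HH (INR (S N)) T) <= 1000 * (INR N + 3)^2.
Proof.
  intros HT. pose proof (pos_INR N) as HN. rewrite S_INR. unfold HH.
  set (M := INR N + 1 + 1).
  assert (HM : 2 <= M) by (unfold M; lra).
  assert (HM3 : M <= INR N + 3) by (unfold M; lra).
  set (a := pp M). set (b := 70 * M - 281).
  assert (Ha : Rabs a <= 394 * M^2).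
  { unfold a, pp. apply Rabs_le. split; nra. }
  assert (Hb : Rabs b <= 351 * M^2).
  { unfold b. apply Rabs_le. split; nra. }
  assert (Hu : 0 <= (1-T)^2 <= 1) by (split; nra).
  assert (Hv : 0 <= T*(1-T) <= 1) by (split; nra).
  assert (Hw : 0 <= T^2 <= 1) by (split; nra).

  apply Rabs_le_between in Hb. apply Rabs_le_between in Ha.
  assert (Hau : - (394 * M^2) <= a * (1-T)^2 <= 394 * M^2) by (split; nra).
  assert (Hbv : - (351 * M^2) <= b * T * (1-T) <= 351 * M^2) by (split; nra).
  assert (HM2 : M^2 <= (INR N + 3)^2) by nra.
  apply Rabs_le. split; nra.
Qed.

Definition qq := 27/32.

Lemma EE_bound N x : 0 <= x <= 1 ->
  Rabs (EE N x) <= 8 * (32/5)^3 * 1000 * ((INR N + 3)^2 * qq^(S N)).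
Proof.
  intros Hx. pose proof (tt_bound x Hx) as HT.
  set (T := tt x) in *.
  pose proof (HH_bound N T ltac:(lra)) as HH1.
  set (h := HH (INR (S N)) T) in *.
  assert (E : EE N x = (8*(1-x)^3 * T^(S N) * / (1-T)^3) * h).
  { unfold EE. fold T. fold h. field. lra. }
  set (c := 8*(1-x)^3 * T^(S N) * / (1-T)^3) in E.
  assert (H1 : 0 <= (1-x)^3 <= 1).
  { split. apply pow_le; lra. rewrite <- (pow1 3). apply pow_incr; lra. }
  assert (H2 : 0 <= T^(S N) <= qq^(S N)).
  { split. apply pow_le; lra. apply pow_incr; unfold qq; lra. }
  assert (H3 : 0 <= / (1-T)^3 <= (32/5)^3).
  { rewrite <- pow_inv. split. apply pow_le. apply Rlt_le, Rinv_0_lt_compat; lra.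
    apply pow_incr. split. apply Rlt_le, Rinv_0_lt_compat; lra.
    replace (32/5) with (/ (5/32)) by field. apply Rinv_le_contravar; lra. }
  assert (Hc : 0 <= c <= 8 * qq^(S N) * (32/5)^3).
  { unfold c. split.
    - apply Rmult_le_pos; [apply Rmult_le_pos; [apply Rmult_le_pos|]|]; lra.
    - apply Rmult_le_compat; try lra.
      + apply Rmult_le_pos; [apply Rmult_le_pos|]; lra.
      + replace (8 * qq^(S N)) with (8 * 1 * qq^(S N)) by ring.
        apply Rmult_le_compat; try lra; try (apply Rmult_le_pos; lra); try (apply Rmult_le_compat_l; lra).
        }
  rewrite E, Rabs_mult, (Rabs_pos_eq c) by lra.
  assert (0 <= Rabs h) by apply Rabs_pos.
  assert (0 <= qq^(S N)) by (apply pow_le; unfold qq; lra).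
  assert (c * Rabs h <= (8 * qq^(S N) * (32/5)^3) * (1000 * (INR N + 3)^2)).
  { apply Rmult_le_compat; lra. }
  nra.
Qed.

Lemma inv_lim : is_lim_seq (fun n => / (INR n + 3)) 0.
Proof.
  assert (H : is_lim_seq (fun n => INR n + 3) p_infty).
  { apply (is_lim_seq_le_p_loc INR). exists 0%nat. intros n _. lra. apply is_lim_seq_INR. }
  apply is_lim_seq_inv in H. exact H. discriminate.
Qed.

Lemma lim_b : is_lim_seq (fun N => (INR N + 3)^2 * qq^(S N)) 0.
Proof.
  set (a := fun N => (INR N + 3)^2 * qq^(S N)).
  assert (Hpos : forall n, 0 < a n).
  { intros n. unfold a. pose proof (pos_INR n). apply Rmult_lt_0_compat.
    apply pow_lt; lra. apply pow_lt; unfold qq; lra. }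
  assert (Hr : is_lim_seq (fun n => Rabs (a (S n) / a n)) qq).
  { apply is_lim_seq_ext with (fun n => qq * ((1 + / (INR n + 3)) * (1 + / (INR n + 3)))).
    - intros n. pose proof (Hpos n). pose proof (Hpos (S n)).
      rewrite Rabs_pos_eq by (apply Rlt_le, Rdiv_lt_0_compat; lra).
      unfold a. pose proof (pos_INR n). rewrite S_INR. 
      assert (0 < qq^(S n)) by (apply pow_lt; unfold qq; lra).
      change (qq ^ S (S n)) with (qq * qq ^ (S n)). field. lra.
    - assert (L : is_lim_seq (fun n => qq * ((1 + / (INR n + 3)) * (1 + / (INR n + 3)))) (qq * ((1+0)*(1+0)))).
      { apply is_lim_seq_mult'. apply is_lim_seq_const.
        apply is_lim_seq_mult'; apply is_lim_seq_plus'; try apply is_lim_seq_const; apply inv_lim. }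
      replace (qq * ((1+0)*(1+0))) with qq in L by ring. exact L. }
  assert (Hs : ex_series (fun n => Rabs (a n))).
  { apply ex_series_DAlembert with qq. unfold qq; lra. intros n. pose proof (Hpos n). lra. exact Hr. }
  apply ex_series_lim_0 in Hs.
  apply is_lim_seq_ext with (fun n => Rabs (a n)); auto.
  intros n. apply Rabs_pos_eq. pose proof (Hpos n). lra.
Qed.

Theorem lemma2p4 :
  is_series (fun n : nat => lemma2p4_term (S n)) (108 + 15 / 2 * PI).
Proof.
  set (V := 108 + 15/2*PI).
  set (K := 8 * (32/5)^3 * 1000).
  set (b := fun N => (INR N + 3)^2 * qq^(S N)).
  assert (Hb : forall N, Rabs (sum_n (fun n => lemma2p4_term (S n)) N - V) <= K * b N).
  { intros N.
    pose proof (is_RInt_minus _ _ _ _ _ _ SS_int (psum_int N)) as H.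
    assert (H' : is_RInt (EE N) 0 1 (V - sum_n (fun n => lemma2p4_term (S n)) N)).
    { eapply is_RInt_ext; [| exact H]. intros x Hx. rewrite Rmin_left, Rmax_right in Hx by lra.
      normR. rewrite psum_closed by lra. toR0. ring. }
    apply norm_RInt_le_const with (M := K * b N) in H'.
    - change norm with Rabs in H'. rewrite Rabs_minus_sym. lra.
    - lra.
    - intros x Hx. change norm with Rabs. apply EE_bound; lra. }
  assert (L : is_lim_seq (sum_n (fun n => lemma2p4_term (S n))) V).
  { apply is_lim_seq_le_le with (u := fun N => V - K * b N) (w := fun N => V + K * b N).
    - intros N. specialize (Hb N). apply Rabs_le_between in Hb. lra.
    - replace (Finite V) with (Finite (V - K * 0)) by (f_equal; ring).
      apply is_lim_seq_minus'. apply is_lim_seq_const. apply is_lim_seq_scal_l with (lu := Finite 0). apply lim_b.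
    - replace (Finite V) with (Finite (V + K * 0)) by (f_equal; ring).
      apply is_lim_seq_plus'. apply is_lim_seq_const. apply is_lim_seq_scal_l with (lu := Finite 0). apply lim_b. }
  exact L.
Qed.
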